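(* Let $r\in\mathcal R$ be a universal distance matrix and let $q$ be a finite distance matrix of order $N$ such that for some $n<N$, $r_{i,j}=q_{i,j}$ for $i,j=1,\dots,n$. Put $i_k=k$ for $k=1,\dots,n$. Then for every $\epsilon>0$ there exist natural numbers $i_{n+1},\dots,i_N$ such that $\max_{k,s=1,\dots,N}|r_{i_k,i_s}-q_{k,s}|<\epsilon$. Conversely, if an infinite proper distance matrix $r$ has this property for every finite distance matrix $q$ (whose upper-left $n\times n$ corner agrees with that of $r$, for some $n$) and every $\epsilon>0$, then $r$ is universal.
   Context: $\mathcal R$ is the set of infinite real matrices $r=\{r_{i,j}\}_{i,j\ge1}$ with $r_{i,i}=0$, $r_{i,j}\ge0$, $r_{i,j}=r_{j,i}$, $r_{i,k}+r_{k,j}\ge r_{i,j}$; a finite distance matrix of order $N$ is an $N\times N$ matrix with the same properties; $p_n(r)$ is the upper-left $n\times n$ corner. $r$ is proper if $r_{i,j}>0$ for $i\neq j$. For a distance matrix $q$ of order $n$, $A(q)=\{a\in\mathbb R^n:|a_i-a_j|\le q_{i,j}\le a_i+a_j\ \forall i,j\}$. A proper $r\in\mathcal R$ is universal if for every $n$, every $a\in A(p_n(r))$ and every $\epsilon>0$ there is $m\in\mathbb N$ with $\max_{1\le i\le n}|r_{i,m}-a_i|<\epsilon$. *)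

(* Defs.v *)
(* Convention: indices are 0-based; the paper's index i>=1 is our i-1.
   An infinite matrix is r : nat -> nat -> R; a finite matrix of order N is
   q : nat -> nat -> R of which only the entries with indices < N matter. *)
From Stdlib Require Import Reals.
Open Scope R_scope.

Definition is_dist_fin (N : nat) (q : nat -> nat -> R) : Prop :=
  (forall i, (i < N)%nat -> q i i = 0) /\
  (forall i j, (i < N)%nat -> (j < N)%nat -> 0 <= q i j) /\
  (forall i j, (i < N)%nat -> (j < N)%nat -> q i j = q j i) /\
  (forall i j k, (i < N)%nat -> (j < N)%nat -> (k < N)%nat ->
     q i k + q k j >= q i j).

Definition in_calR (r : nat -> nat -> R) : Prop :=
  (forall i, r i i = 0) /\
  (forall i j, 0 <= r i j) /\
  (forall i j, r i j = r j i) /\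
  (forall i j k, r i k + r k j >= r i j).

Definition proper (r : nat -> nat -> R) : Prop :=
  forall i j, i <> j -> r i j > 0.

(* a \in A(q) for a distance matrix q of order n (vector a given by its
   first n coordinates) *)
Definition inA (n : nat) (q : nat -> nat -> R) (a : nat -> R) : Prop :=
  forall i j, (i < n)%nat -> (j < n)%nat ->
    Rabs (a i - a j) <= q i j /\ q i j <= a i + a j.

(* universality; p_n(r) is r restricted to indices < n *)
Definition universal (r : nat -> nat -> R) : Prop :=
  in_calR r /\ proper r /\
  forall (n : nat) (a : nat -> R), inA n r a ->
    forall eps, eps > 0 ->
      exists m : nat, forall i, (i < n)%nat -> Rabs (r i m - a i) < eps.

Definition extension_property (r : nat -> nat -> R) : Prop :=
  forall (N n : nat) (q : nat -> nat -> R),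
    (n < N)%nat -> is_dist_fin N q ->
    (forall i j, (i < n)%nat -> (j < n)%nat -> r i j = q i j) ->
    forall eps, eps > 0 ->
      exists idx : nat -> nat,
        (forall k, (k < n)%nat -> idx k = k) /\
        (forall k s, (k < N)%nat -> (s < N)%nat ->
           Rabs (r (idx k) (idx s) - q k s) < eps).

(* Main.v *)
Require Import Defs.
From Stdlib Require Import Reals.
From Stdlib Require Import Lra Lia Arith.
Open Scope R_scope.

Fixpoint fmin (K : nat) (g : nat -> R) : R :=
  match K with 0%nat => g 0%nat | S K' => Rmin (fmin K' g) (g (S K')) end.

Lemma fmin_le : forall K g k, (k <= K)%nat -> fmin K g <= g k.
Proof.
  induction K; intros g k Hk; simpl.
  - replace k with 0%nat by lia; lra.
  - destruct (Nat.eq_dec k (S K)).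
    + subst; apply Rmin_r.
    + eapply Rle_trans; [apply Rmin_l|]. apply IHK; lia.
Qed.

Lemma fmin_ex : forall K g, exists k, (k <= K)%nat /\ fmin K g = g k.
Proof.
  induction K; intros g; simpl.
  - exists 0%nat; split; auto.
  - destruct (IHK g) as [k [Hk E]]. unfold Rmin.
    destruct (Rle_dec (fmin K g) (g (S K))).
    + exists k; split; auto.
    + exists (S K); split; auto.
Qed.

Lemma bound : forall (idx : nat -> nat) K, exists M, forall k, (k < K)%nat -> (idx k < M)%nat.
Proof.
  induction K.
  - exists 0%nat; intros; lia.
  - destruct IHK as [M HM]. exists (Nat.max M (S (idx K))).
    intros k Hk. destruct (Nat.eq_dec k K).
    + subst; lia.
    + specialize (HM k ltac:(lia)); lia.
Qed.

Lemma step r q N n (U : universal r) (Hq : is_dist_fin N q) K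
  (HK : (K < N)%nat) (HnK : (n <= K)%nat) :
  (forall eps, eps > 0 -> exists idx : nat -> nat,
     (forall k, (k < n)%nat -> idx k = k) /\
     (forall k s, (k < K)%nat -> (s < K)%nat ->
        Rabs (r (idx k) (idx s) - q k s) < eps)) ->
  forall eps, eps > 0 -> exists idx : nat -> nat,
     (forall k, (k < n)%nat -> idx k = k) /\
     (forall k s, (k < S K)%nat -> (s < S K)%nat ->
        Rabs (r (idx k) (idx s) - q k s) < eps).
Proof.
  destruct U as [[r0 [rnn [rsym rtri]]] [prp univ]].
  destruct Hq as [q0 [qnn [qsym qtri]]].
  intros IH eps He.
  destruct (IH (eps/2)) as [idx [Hid Hidx]]; [lra|].
  destruct K as [|K'].
  - exists (fun _ => 0%nat). split.
    + intros k Hk; lia.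
    + intros k s Hk Hs. replace k with 0%nat by lia. replace s with 0%nat by lia.
      rewrite r0, q0 by lia. replace (0 - 0) with 0 by ring. rewrite Rabs_R0; lra.
  - set (g := fun j k => q k (S K') + eps/2 + r (idx k) j).
    set (a := fun j => fmin K' (g j)).
    destruct (bound idx (S K')) as [M HM].
    assert (HA : inA M r a).
    { intros i j _ _.
      destruct (fmin_ex K' (g i)) as [l [Hl Hal]].
      destruct (fmin_ex K' (g j)) as [l' [Hl' Hal']].
      pose proof (fmin_le K' (g i) l' Hl'). pose proof (fmin_le K' (g j) l Hl).
      unfold a, g in *.
      pose proof (rtri (idx l') i j). pose proof (rtri (idx l) j i).
      pose proof (rsym i j). pose proof (rtri i j (idx l)).
      pose proof (rtri (idx l) j (idx l')).
      pose proof (Hidx l l' ltac:(lia) ltac:(lia)) as Hb. apply Rabs_def2 in Hb.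
      pose proof (qtri l l' (S K') ltac:(lia) ltac:(lia) ltac:(lia)).
      pose proof (qsym (S K') l' ltac:(lia) ltac:(lia)).
      pose proof (rsym i (idx l)).
      split.
      - apply Rabs_le. lra.
      - lra. }
    destruct (univ M a HA (eps/2)) as [m Hm]; [lra|].
    assert (Hnew : forall k, (k < S K')%nat -> Rabs (r (idx k) m - q k (S K')) < eps).
    { intros k Hk. specialize (Hm (idx k) (HM k Hk)).
      destruct (fmin_ex K' (g (idx k))) as [l [Hl Hal]].
      pose proof (fmin_le K' (g (idx k)) k ltac:(lia)).
      unfold a, g in *. rewrite r0 in H.
      pose proof (Hidx l k ltac:(lia) ltac:(lia)) as Hb. apply Rabs_def2 in Hb.
      pose proof (qtri k (S K') l ltac:(lia) ltac:(lia) ltac:(lia)).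
      pose proof (qsym k l ltac:(lia) ltac:(lia)).
      apply Rabs_def2 in Hm. apply Rabs_def1; lra. }
    exists (fun k => if Nat.eqb k (S K') then m else idx k). split.
    + intros k Hk. destruct (Nat.eqb_spec k (S K')); [lia | apply Hid; auto].
    + intros k s Hk Hs.
      destruct (Nat.eqb_spec k (S K')), (Nat.eqb_spec s (S K')).
      * subst. rewrite r0, q0 by lia. replace (0 - 0) with 0 by ring. rewrite Rabs_R0; lra.
      * subst k. rewrite rsym, (qsym (S K') s) by lia. apply Hnew; lia.
      * subst s. apply Hnew; lia.
      * specialize (Hidx k s ltac:(lia) ltac:(lia)). lra.
Qed.

Theorem corollary2 :
  (forall r : nat -> nat -> R, universal r -> extension_property r) /\
  (forall r : nat -> nat -> R,
     in_calR r -> proper r -> extension_property r -> universal r).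
Proof.
  split.
  - intros r U N n q HnN Hq Hag.
    assert (Hd : forall d, (n + d <= N)%nat -> forall eps, eps > 0 ->
      exists idx : nat -> nat,
        (forall k, (k < n)%nat -> idx k = k) /\
        (forall k s, (k < n + d)%nat -> (s < n + d)%nat ->
           Rabs (r (idx k) (idx s) - q k s) < eps)).
    { induction d; intros Hle.
      - intros eps He. exists (fun k => k). split; auto.
        intros k s Hk Hs. rewrite Hag by lia. replace (q k s - q k s) with 0 by ring.
        rewrite Rabs_R0; lra.
      - replace (n + S d)%nat with (S (n + d)) by lia.
        apply (step r q N n U Hq); [lia|lia|]. apply IHd; lia. }
    intros eps He. replace N with (n + (N - n))%nat by lia.
    apply Hd; [lia|auto].
  - intros r Hr Hp Hext. split; [auto|split; [auto|]].
    destruct Hr as [r0 [rnn [rsym rtri]]].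
    intros n a HA eps He.
    set (q := fun i j => if Nat.ltb i n then (if Nat.ltb j n then r i j else a i)
                          else (if Nat.ltb j n then a j else 0)).
    assert (Ha0 : forall i, (i < n)%nat -> 0 <= a i).
    { intros i Hi. destruct (HA i i Hi Hi) as [_ H]. rewrite r0 in H. lra. }
    assert (Hab : forall i j, (i < n)%nat -> (j < n)%nat -> a i - a j <= r i j).
    { intros i j Hi Hj. destruct (HA i j Hi Hj) as [H _].
      pose proof (Rle_abs (a i - a j)). lra. }
    assert (Hs : forall i j, (i < n)%nat -> (j < n)%nat -> r i j <= a i + a j).
    { intros i j Hi Hj. apply (HA i j Hi Hj). }
    assert (Hdist : is_dist_fin (S n) q).
    { unfold q. split; [|split; [|split]].
      - intros i Hi. destruct (Nat.ltb_spec i n); auto.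
      - intros i j Hi Hj. destruct (Nat.ltb_spec i n), (Nat.ltb_spec j n); auto; lra.
      - intros i j Hi Hj. destruct (Nat.ltb_spec i n), (Nat.ltb_spec j n); auto.
      - intros i j k Hi Hj Hk.
        destruct (Nat.ltb_spec i n), (Nat.ltb_spec j n), (Nat.ltb_spec k n).
        all: try (assert (i = n) by lia); try (assert (j = n) by lia);
             try (assert (k = n) by lia); subst.
        all: try (apply Rle_ge).
        all: try (pose proof (Hab i k ltac:(lia) ltac:(lia)); lra).
        all: try (pose proof (Hab j k ltac:(lia) ltac:(lia)); lra).
        all: try (pose proof (Hs i j ltac:(lia) ltac:(lia)); lra).
        all: try (pose proof (Ha0 i ltac:(lia)); lra).
        all: try (pose proof (Ha0 j ltac:(lia)); lra).
        all: try (pose proof (Ha0 k ltac:(lia)); lra).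
        all: try lra.
        all: try (apply Rge_le; apply rtri).
        all: pose proof (Hab j k ltac:(lia) ltac:(lia)); pose proof (rsym k j); lra. }
    destruct (Hext (S n) n q ltac:(lia) Hdist) with (eps := eps) as [idx [Hid Hidx]].
    + intros i j Hi Hj. unfold q.
      destruct (Nat.ltb_spec i n), (Nat.ltb_spec j n); auto; lia.
    + auto.
    + exists (idx n). intros i Hi.
      specialize (Hidx i n ltac:(lia) ltac:(lia)). rewrite Hid in Hidx by auto.
      unfold q in Hidx. destruct (Nat.ltb_spec i n), (Nat.ltb_spec n n); try lia.
      exact Hidx.
Qed.
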